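(* Let $N=2$, $n\ge1$, $\rho\in\{0,1\}$, with homogeneous nonzero parameters $a,b,c,d,\kappa$ and $a^nc^n+(-1)^\rho\kappa^n\ne0$. Let $t(\lambda)$ be a polynomial of degree $\le n$ with $t(0)=1+(-1)^\rho b^nd^n/\kappa^n$ and leading coefficient (of $\lambda^n$) $a^nc^n+(-1)^\rho\kappa^n$, satisfying $$t(\lambda)t(-\lambda)=(-1)^\rho\big(z(\lambda)+z(-\lambda)\big)+\operatorname{tr}\big(\mathcal L(\lambda^2)^n\big),$$ where $z(\lambda)=\big((b+a\kappa\lambda)(d-c\kappa\lambda)/\kappa\big)^n$ and $\mathcal L(\Lambda)=\begin{pmatrix}1-\kappa^2\Lambda&-\Lambda(a^2-b^2)\\ c^2-d^2&b^2d^2/\kappa^2-\Lambda a^2c^2\end{pmatrix}$. Then $$t(\lambda)t(-\lambda)=(-1)^n\prod_{q}\big(A(q)\lambda^2-C(q)+2iB(q)\lambda\big),$$ and, assuming all $A(q)\ne0$, $$t(\lambda)=\big(a^nc^n+(-1)^\rho\kappa^n\big)\prod_q(\lambda+\sigma_q\lambda_q)$$ for some signs $\sigma_q\in\{\pm1\}$ with $\prod_q\sigma_q=(-1)^\rho$ (i.e. the number of minus signs is even for $\rho=0$ and odd for $\rho=1$). Here $q$ runs over $\{\pi(2s+1-\rho)/n: s=0,\dots,n-1\}$.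
   Context: $A(q)=a^2c^2-2\kappa ac\cos q+\kappa^2$, $B(q)=(ad-bc)\sin q$, $C(q)=1-2\frac{bd}{\kappa}\cos q+\frac{b^2d^2}{\kappa^2}$, $D(q)=A(q)C(q)-B(q)^2$, and $\lambda_q=(\sqrt{D(q)}-iB(q))/A(q)$, where the square roots are chosen so that $\sqrt{D(q)}=\sqrt{D(-q)}$ for $q\not\equiv0,\pi\pmod{2\pi}$, $\sqrt{D(0)}=(\kappa-ac)(1-bd/\kappa)$ and $\sqrt{D(\pi)}=(\kappa+ac)(1+bd/\kappa)$. (Angles are taken modulo $2\pi$.) *)

(* Defs.v *)
From HB Require Import structures.
From mathcomp Require Import all_boot all_order all_algebra.
From mathcomp Require Import reals trigo.
From mathcomp.real_closed Require Export complex.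
Set Implicit Arguments. Unset Strict Implicit. Unset Printing Implicit Defensive.
Import Order.TTheory GRing.Theory Num.Theory.
Local Open Scope ring_scope.
Local Open Scope complex_scope.

Section Defs.
Variable R : realType.
Local Notation C := R[i].

Definition qnum (rho : bool) (s : nat) : nat := (2 * s + 1 - rho)%N.

Definition qang (n : nat) (rho : bool) (s : nat) : R :=
  pi * (qnum rho s)%:R / n%:R.

Definition Acoef (a c k : C) (q : R) : C :=
  a ^+ 2 * c ^+ 2 - 2%:R * k * a * c * (cos q)%:C + k ^+ 2.

Definition Bcoef (a b c d : C) (q : R) : C :=
  (a * d - b * c) * (sin q)%:C.

Definition Ccoef (b d k : C) (q : R) : C :=
  1 - 2%:R * (b * d / k) * (cos q)%:C + b ^+ 2 * d ^+ 2 / k ^+ 2.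

Definition Dcoef (a b c d k : C) (q : R) : C :=
  Acoef a c k q * Ccoef b d k q - Bcoef a b c d q ^+ 2.

(* lambda_q = (sqrt D(q) - i B(q)) / A(q), given the chosen square root sD *)
Definition lam (a b c d k : C) (q : R) (sD : C) : C :=
  (sD - 'i * Bcoef a b c d q) / Acoef a c k q.

Definition zfun (n : nat) (a b c d k : C) (x : C) : C :=
  ((b + a * k * x) * (d - c * k * x) / k) ^+ n.

Definition Lmat (a b c d k : C) (L : C) : 'M[C]_2 :=
  \matrix_(i < 2, j < 2)
    if (i == 0 :> nat) then
      (if (j == 0 :> nat) then 1 - k ^+ 2 * L else - (L * (a ^+ 2 - b ^+ 2)))
    else
      (if (j == 0 :> nat) then c ^+ 2 - d ^+ 2
       else b ^+ 2 * d ^+ 2 / k ^+ 2 - L * a ^+ 2 * c ^+ 2).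

End Defs.
Arguments qang {R}.

(* Main.v *)
Require Import Defs.
From HB Require Import structures.
From mathcomp Require Import all_boot all_order all_algebra.
From mathcomp Require Import reals trigo.
From mathcomp.real_closed Require Import complex.
From mathcomp Require Import ring lra zify.
Import Order.TTheory GRing.Theory Num.Theory.
Local Open Scope ring_scope.
Local Open Scope complex_scope.

Section S. Variable R : realType.
Local Notation C := R[i].
Definition ex (x : R) : C := Complex (cos x) (sin x).
Lemma exE x : ex x = (cos x)%:C + 'i * (sin x)%:C.
Proof. by apply/eqP; rewrite eq_complex /=; simpc. Qed.
Lemma exD x y : ex (x + y) = ex x * ex y.
Proof. apply/eqP; rewrite eq_complex /= cosD sinD; apply/andP; split; apply/eqP; ring. Qed.
Lemma ex0 : ex 0 = 1.
Proof. by apply/eqP; rewrite eq_complex /= cos0 sin0; apply/andP; split; apply/eqP. Qed.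
Lemma exMn x m : ex (x *+ m) = ex x ^+ m.
Proof. elim: m => [|m IH]; first by rewrite mulr0n expr0 ex0.
by rewrite mulrS exD IH exprS. Qed.
Lemma ex2pi : ex (pi *+ 2) = 1.
Proof. by apply/eqP; rewrite eq_complex /= cos2pi sin2pi; apply/andP; split; apply/eqP. Qed.
Lemma expi : ex pi = -1.
Proof. by apply/eqP; rewrite eq_complex /= cospi sinpi oppr0; apply/andP; split; apply/eqP. Qed.
Lemma exN x : ex (- x) = (ex x)^*.
Proof. by apply/eqP; rewrite eq_complex /= cosN sinN; apply/andP; split; apply/eqP. Qed.
Lemma exJ x : ex x * (ex x)^* = 1.
Proof. apply/eqP; rewrite eq_complex /=; apply/andP; split; apply/eqP.
  have := cos2Dsin2 x; rewrite -!expr2 => <-; ring. ring. Qed.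
Lemma ex_neq1 y : 0 < y < pi -> ex (y *+ 2) != 1.
Proof.
move=> hy; apply/negP => /eqP; move/eqP; rewrite eq_complex /= => /andP[/eqP h1 /eqP h2].
have s0 := sin_gt0_pi hy.
move: h2; rewrite sin_mulr2n => /eqP; rewrite mulrn_eq0 /= mulf_eq0 => /orP[/eqP c0|]; last by rewrite gt_eqF.
move: h1; rewrite cos_mulr2n c0 expr2 mul0r mul0rn => /eqP; rewrite -subr_eq0 => /eqP; lra.
Qed.
Lemma ex_neq0 x : ex x != 0.
Proof. by apply/negP => /eqP h; have := exJ x; rewrite h mul0r => /eqP; rewrite eq_sym oner_eq0. Qed.
Definition zeta (n : nat) := ex (pi *+ 2 / n%:R).
Lemma zeta_prim n : (0 < n)%N -> n.-primitive_root (zeta n).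
Proof.
move=> n0; rewrite /primitive_root_of_unity n0 /=; apply/forallP => i; rewrite unity_rootE.
rewrite /zeta -exMn.
case: (ltngtP i.+1 n) => h; last first.
- rewrite h -(mulr_natr (pi *+ 2 / n%:R)) mulfVK ?ex2pi ?eqxx //. by rewrite pnatr_eq0 -lt0n.
- by move: h; rewrite ltnS leqNgt ltn_ord.
have -> : (pi : R) *+ 2 / n%:R *+ i.+1 = (pi * i.+1%:R / n%:R) *+ 2.
  rewrite -(mulr_natr (pi *+ 2 / n%:R) i.+1) -(mulr_natr (pi * _ / _) 2) -(mulr_natr pi 2).
  by field; rewrite pnatr_eq0 -lt0n.
rewrite eqbF_neg; apply/ex_neq1; apply/andP; split.
  by apply: divr_gt0; [apply: mulr_gt0; [exact: pi_gt0| rewrite ltr0n]| rewrite ltr0n].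
rewrite ltr_pdivrMr ?ltr0n // ltr_pM2l ?pi_gt0 // ltr_nat //.
Qed.

Section W.
Variables (n : nat) (rho : bool).
Hypothesis n0 : (0 < n)%N.
Definition w (s : 'I_n) : C := ex (qang n rho s).
Definition w0 : C := ex (pi * (1 - rho)%:R / n%:R).
Lemma w_decomp (s : 'I_n) : w s = w0 * zeta n ^+ s.
Proof.
rewrite /w /w0 /zeta -exMn -exD /qang /qnum; congr ex.
have -> : (2 * s + 1 - rho = (1 - rho) + 2 * s)%N by case: rho; lia.
rewrite natrD natrM -(mulr_natr (pi *+ 2 / n%:R) s) -(mulr_natr pi 2).
by field; rewrite pnatr_eq0 -lt0n.
Qed.
Lemma w0n : w0 ^+ n = - (-1) ^+ rho.
Proof.
rewrite /w0 -exMn -(mulr_natr (pi * _ / _) n) mulfVK; last by rewrite pnatr_eq0 -lt0n.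
by case: rho => /=; rewrite ?mulr0 ?ex0 ?mulr1 ?expi ?expr0 ?expr1 ?opprK.
Qed.
Lemma prod_w (mu u : C) : \prod_(s < n) (mu - u * w s) = mu ^+ n + (-1) ^+ rho * u ^+ n.
Proof.
have [->|u0] := eqVneq u 0.
  by rewrite expr0n gtn_eqF // mulr0 addr0; under eq_bigr do rewrite mul0r subr0; rewrite prodr_const card_ord.
have F := factor_Xn_sub_1 (@zeta_prim n n0).
have w00 : w0 != 0 by apply: ex_neq0.
have H : \prod_(i < n) (mu / (u * w0) - zeta n ^+ i) = (mu / (u * w0)) ^+ n - 1.
  have := congr1 (fun p => p.[mu / (u * w0)]) F.
  rewrite horner_prod big_mkord hornerD hornerN hornerXn hornerC => <-.
  by apply: eq_bigr => i _; rewrite hornerXsubC.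
transitivity (\prod_(s < n) ((u * w0) * (mu / (u * w0) - zeta n ^+ s))).
  apply: eq_bigr => s _; rewrite w_decomp; by field; rewrite w00 u0.
rewrite big_split /= prodr_const card_ord.
rewrite H expr_div_n exprMn w0n; by field; rewrite ?signr_eq0 ?expf_neq0 ?mulf_neq0.
Qed.
Lemma prod_wc (mu u : C) : \prod_(s < n) (mu - u * (w s)^*) = mu ^+ n + (-1) ^+ rho * u ^+ n.
Proof.
have := congr1 conjc (prod_w mu^* u^*).
rewrite rmorph_prod rmorphD rmorphM !rmorphXn rmorphN1 /= !conjcK => <-.
apply: eq_bigr => s _. rewrite rmorphB rmorphM /= !conjcK. done.
Qed.
End W.
End S.

Lemma ord2_cases (i : 'I_2) : i = 0 \/ i = 1.
Proof. case: i => [[|[|//]] Hi]; [left|right]; exact/val_inj. Qed.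

Lemma big_ord2 (F : nmodType) (G : 'I_2 -> F) : \sum_(i < 2) G i = G 0 + G 1.
Proof. rewrite big_ord_recr big_ord_recr big_ord0 /= add0r; congr (G _ + G _); exact/val_inj. Qed.

Lemma tr2 (F : fieldType) (M : 'M[F]_2) (m1 m2 : F) :
  m1 + m2 = M 0 0 + M 1 1 -> m1 * m2 = M 0 0 * M 1 1 - M 0 1 * M 1 0 ->
  forall m, \tr (M ^+ m) = m1 ^+ m + m2 ^+ m.
Proof.
move=> hs hp.
have M2 : M ^+ 2 = (m1 + m2) *: M - (m1 * m2) *: 1.
  rewrite hs hp; apply/matrixP => i j; rewrite expr2 -mulmxE !mxE !big_ord2.
  by case: (ord2_cases i) => ->; case: (ord2_cases j) => ->; rewrite ?eqxx /=; ring.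
suff H : forall m, \tr (M ^+ m) = m1 ^+ m + m2 ^+ m /\ \tr (M ^+ m.+1) = m1 ^+ m.+1 + m2 ^+ m.+1.
  by move=> m; case: (H m).
elim=> [|m [IH1 IH2]].
  by rewrite !expr0 !expr1 mxtrace1 hs /mxtrace big_ord2.
split=> //.
rewrite exprSr -(exprSr M m.+1) -[m.+2]addn2 exprD M2 mulrBr -!scalerAr mulr1.
rewrite mxtraceD raddfN /= !mxtraceZ -exprSr IH1 IH2 addn2 !exprS; ring.
Qed.

Section P1.
Variable R : realType.
Local Notation C := R[i].
Variables (n : nat) (rho : bool) (a b c d k : C).
Hypothesis n0 : (0 < n)%N.
Hypothesis k0 : k != 0.
Local Notation w := (w R n rho).
Local Notation q s := (qang n rho s).
Local Notation pw := (@prod_w R n rho n0).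
Local Notation pwc := (@prod_wc R n rho n0).

Definition U (x : C) : C := (b + a * k * x) * (d - c * k * x) / k.
Definition Tt (x : C) : C := 1 + (b * d / k) ^+ 2 - x ^+ 2 * (k ^+ 2 + a ^+ 2 * c ^+ 2).

Lemma exJE (x : R) : (ex R x)^* = (cos x)%:C - 'i * (sin x)%:C.
Proof. by apply/eqP; rewrite eq_complex /=; simpc. Qed.
Lemma exJE' (x : R) : Num.conj (ex R x) = (cos x)%:C - 'i * (sin x)%:C.
Proof. exact: exJE. Qed.

Lemma Eid (s : 'I_n) x :
  Acoef a c k (q s) * x ^+ 2 - Ccoef b d k (q s) + 2%:R * 'i * Bcoef a b c d (q s) * x
  = U x * w s + U (- x) * (w s)^* - Tt x.
Proof. rewrite /w ?exJE ?exJE' exE /Acoef /Bcoef /Ccoef /U /Tt. by field; rewrite k0. Qed.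

Lemma sgn_sq (m : nat) : (-1) ^+ m * (-1) ^+ m = 1 :> C.
Proof. by rewrite -exprMn mulrNN mulr1 expr1n. Qed.

Lemma wJ (s : 'I_n) : w s * (w s)^* = 1.
Proof. exact: exJ. Qed.

Lemma part1 x :
  (-1) ^+ rho * (zfun n a b c d k x + zfun n a b c d k (- x))
  + \tr ((Lmat a b c d k (x ^+ 2)) ^+ n) =
  (-1) ^+ n * \prod_(s < n)
    (Acoef a c k (q s) * x ^+ 2 - Ccoef b d k (q s)
     + 2%:R * 'i * Bcoef a b c d (q s) * x).
Proof.
have zE : forall y, zfun n a b c d k y = U y ^+ n by [].
rewrite !zE.
under eq_bigr do rewrite Eid.
set u := U x; set u' := U (-x); set T := Tt x.
have two0 : (2%:R : C) != 0 by rewrite pnatr_eq0.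
pose r := sqrtC (T ^+ 2 - 4%:R * (u * u')).
have hr : r ^+ 2 = T ^+ 2 - 4%:R * (u * u') by rewrite sqrtCK.
pose m1 := (T + r) / 2%:R; pose m2 := (T - r) / 2%:R.
have hs : m1 + m2 = T by rewrite /m1 /m2; field.
have hp : m1 * m2 = u * u'.
  transitivity ((T ^+ 2 - r ^+ 2) / 4%:R); first by rewrite /m1 /m2; field.
  by rewrite hr; field.
have htr : \tr ((Lmat a b c d k (x ^+ 2)) ^+ n) = m1 ^+ n + m2 ^+ n.
  apply: tr2.
    by rewrite hs /T /Tt /Lmat !mxE /=; field.
  by rewrite hp /u /u' /U /Lmat !mxE /=; field.
have sr := sgn_sq rho; have sn := sgn_sq n.
have hW : \prod_(s < n) w s = (-1) ^+ rho * (-1) ^+ n.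
  have := pw 0 (-1).
  under eq_bigr do rewrite sub0r mulN1r opprK.
  by rewrite expr0n gtn_eqF //= add0r.
have e : forall s, (u * w s + u' * (w s)^* - T) * w s = u * w s ^+ 2 - T * w s + u'.
  move=> s; have := wJ s => h.
  transitivity (u * w s ^+ 2 - T * w s + u' * (w s * (w s)^*)); first by ring.
  by rewrite h mulr1.
have hG : \prod_(s < n) (u * w s + u' * (w s)^* - T) * \prod_(s < n) w s
          = u ^+ n + u' ^+ n + (-1) ^+ rho * (m1 ^+ n + m2 ^+ n).
  rewrite -big_split /=.
  under eq_bigr do rewrite e.
  have [u0|u0] := eqVneq u 0.
    rewrite u0; under eq_bigr do rewrite mul0r sub0r addrC.
    rewrite pw expr0n gtn_eqF //= add0r.
    move: hp; rewrite u0 mul0r => /eqP; rewrite mulf_eq0 => /orP[] /eqP h0.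
      by move: hs; rewrite h0 add0r => ->; rewrite expr0n gtn_eqF //= add0r.
    by move: hs; rewrite h0 addr0 => ->; rewrite expr0n gtn_eqF //= addr0.
  apply: (mulfI (expf_neq0 n u0)).
  have -> : u ^+ n * \prod_(s < n) (u * w s ^+ 2 - T * w s + u')
          = \prod_(s < n) (u * (u * w s ^+ 2 - T * w s + u')).
    by rewrite big_split /= prodr_const card_ord.
  have ee : forall s, u * (u * w s ^+ 2 - T * w s + u') = (m1 - u * w s) * (m2 - u * w s).
    move=> s; transitivity (m1 * m2 - (m1 + m2) * (u * w s) + (u * w s) ^+ 2).
      by rewrite hp hs; ring.
    by ring.
  under eq_bigr do rewrite ee.
  rewrite big_split /= !pw.
  apply/eqP; rewrite -subr_eq0; apply/eqP.
  transitivity ((m1 ^+ n * m2 ^+ n - u ^+ n * u' ^+ n) + ((-1) ^+ rho * (-1) ^+ rho - 1) * (u ^+ n) ^+ 2).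
    by ring.
  by rewrite sr subrr mul0r addr0 -!exprMn hp subrr.
have hP : \prod_(s < n) (u * w s + u' * (w s)^* - T)
          = (u ^+ n + u' ^+ n + (-1) ^+ rho * (m1 ^+ n + m2 ^+ n)) * ((-1) ^+ rho * (-1) ^+ n).
  rewrite -hG hW -mulrA.
  have -> : (-1) ^+ rho * (-1) ^+ n * ((-1) ^+ rho * (-1) ^+ n) = ((-1) ^+ rho * (-1) ^+ rho) * ((-1) ^+ n * (-1) ^+ n) :> C by ring.
  by rewrite sr sn !mulr1.
rewrite hP htr; symmetry.
transitivity ((-1) ^+ rho * ((-1) ^+ n * (-1) ^+ n) * (u ^+ n + u' ^+ n) + ((-1) ^+ rho * (-1) ^+ rho) * ((-1) ^+ n * (-1) ^+ n) * (m1 ^+ n + m2 ^+ n)); first by ring.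
by rewrite sr sn !mulr1 mul1r.
Qed.
End P1.

Section Pair.
Variable R : realType.
Local Notation C := R[i].
Variables (n : nat) (rho : bool).
Hypothesis n0 : (0 < n)%N.
Local Notation w := (w R n rho).
Local Notation q s := (@qang R n rho s).

Definition pv (s : 'I_n) : nat := (if rho then n - s else (n - s).-1)%N.
Definition pp (s : 'I_n) : 'I_n := Ordinal (ltn_pmod (pv s) n0).

Lemma qnum_lt (s : 'I_n) : (qnum rho s < 2 * n)%N.
Proof. have := ltn_ord s; rewrite /qnum; case: rho => /=; lia. Qed.

Lemma pvE (s : 'I_n) : (pv s %% n)%N = (if rho then (if s == 0 :> nat then 0 else n - s) else n - s - 1)%N.
Proof.
have := ltn_ord s; rewrite /pv; case: rho => /= hs.
  case: eqP => [->|h]; first by rewrite subn0 modnn.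
  by rewrite modn_small; lia.
by rewrite modn_small; lia.
Qed.

Lemma ppE (s : 'I_n) : nat_of_ord (pp s) = (pv s %% n)%N. Proof. reflexivity. Qed.

Lemma pp_invol : involutive pp.
Proof.
move=> s; apply/val_inj; change (nat_of_ord (pp (pp s)) = nat_of_ord s); rewrite ppE pvE ppE pvE.
have := ltn_ord s; case: rho => hs.
  case: (eqVneq (val s) 0) => [->|h] /=; first by [].
  have -> : (n - s == 0)%N = false by apply/eqP; lia.
  lia.
lia.
Qed.

Lemma qnum_pp (s : 'I_n) :
  (qnum rho (pp s) + qnum rho s = if rho && (s == 0 :> nat) then 0 else 2 * n)%N.
Proof.
have := ltn_ord s; rewrite /qnum ppE pvE; case: rho => hs /=.
  case: (eqVneq (val s) 0) => [->|h] /=; first by [].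
  lia.
lia.
Qed.


Lemma q_pp (s : 'I_n) : q (pp s) = (if rho && (s == 0 :> nat) then (0 : R) else (pi : R) *+ 2) - q s.
Proof.
have h := qnum_pp s; have l1 := qnum_lt s; rewrite /qang.
case: ifP h => _ h.
  have [-> ->] : qnum rho (pp s) = 0%N /\ qnum rho s = 0%N by lia.
  by rewrite mulr0n mulr0 mul0r subrr.
have -> : qnum rho (pp s) = (2 * n - qnum rho s)%N by lia.
rewrite natrB; last by lia.
rewrite natrM -(mulr_natr pi 2); field; by rewrite pnatr_eq0 -lt0n.
Qed.

Lemma cos_pp (s : 'I_n) : cos (q (pp s)) = cos (q s).
Proof. by rewrite q_pp; case: ifP => _; rewrite ?sub0r ?cosN // cosB cos2pi sin2pi mul1r mul0r addr0. Qed.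
Lemma sin_pp (s : 'I_n) : sin (q (pp s)) = - sin (q s).
Proof. by rewrite q_pp; case: ifP => _; rewrite ?sub0r ?sinN // sinB cos2pi sin2pi mul1r mul0r sub0r. Qed.
Lemma w_pp (s : 'I_n) : w (pp s) = Num.conj (w s).
Proof. by apply/eqP; rewrite eq_complex /= cos_pp sin_pp; apply/andP; split. Qed.

Lemma dvd_iff (s : 'I_n) : ((2 * n) %| qnum rho s)%N = (qnum rho s == 0)%N.
Proof.
have l1 := qnum_lt s; apply/idP/eqP => [h|->]; last exact: dvdn0.
case: (posnP (qnum rho s)) => // hp; have := dvdn_leq hp h; lia.
Qed.
Lemma mod_iff (s : 'I_n) : (qnum rho s = n %[mod 2 * n])%N <-> qnum rho s = n.
Proof.
have l1 := qnum_lt s; rewrite !modn_small //; lia.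
Qed.
End Pair.

Lemma prod_inv (T : comNzRingType) (n : nat) (p : 'I_n -> 'I_n) (hp : involutive p) (f : 'I_n -> T) :
  \prod_(s < n) f s = \prod_(s < n | (s < p s)%N) (f s * f (p s)) * \prod_(s < n | p s == s :> nat) f s.
Proof.
rewrite (bigID (fun s : 'I_n => (s < p s)%N)) /=.
rewrite (bigID (fun s : 'I_n => p s == s :> nat) (fun s : 'I_n => ~~ (s < p s)%N)) /=.
have -> : \prod_(i < n | ~~ (i < p i)%N && (p i == i :> nat)) f i = \prod_(i < n | p i == i :> nat) f i.
  by apply: eq_bigl => s; case: eqP => [->|]; rewrite ?ltnn ?andbT ?andbF.
have -> : \prod_(i < n | ~~ (i < p i)%N && ~~ (p i == i :> nat)) f i = \prod_(i < n | (p i < i)%N) f i.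
  by apply: eq_bigl => s; rewrite -leqNgt; case: (ltngtP (p s) s).
rewrite [\prod_(i < n | (p i < i)%N) f i](reindex_inj (inv_inj hp)) /=.
have -> : \prod_(j < n | (p (p j) < p j)%N) f (p j) = \prod_(j < n | (j < p j)%N) f (p j).
  by apply: eq_bigl => s; rewrite hp.
rewrite big_split /=; ring.
Qed.

Lemma prod_e_gen (T : comNzRingType) (n : nat) (rho : bool) (n0 : (0 < n)%N) :
  \prod_(s < n | pp n rho n0 s == s :> nat) (if qnum rho s == 0%N then -1 else 1) = (-1) ^+ rho :> T.
Proof.
case: rho.
  have s0p : (pp n true n0 (Ordinal n0) == Ordinal n0 :> nat) by rewrite ppE pvE.
  rewrite (bigD1 (Ordinal n0)) //= big1 ?mulr1 //= => s /andP[_ hs].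
  have hs0 : (nat_of_ord s != 0)%N by apply: contra hs => /eqP h; apply/eqP/val_inj.
  by rewrite /qnum ifF //; apply/eqP; move: hs0; lia.
rewrite big1 // => s _; rewrite /qnum /=.
by have -> : (2 * s + 1 - 0 == 0)%N = false by apply/eqP; lia.
Qed.

Section Part2.
Variable R : realType.
Local Notation C := R[i].
Variables (n : nat) (rho : bool) (a b c d k : C) (sD : 'I_n -> C).
Hypothesis n0 : (0 < n)%N.
Hypothesis k0 : k != 0.
Hypothesis hsD : forall s : 'I_n, sD s ^+ 2 = Dcoef a b c d k (qang n rho s).
Hypothesis hsD0 : forall s : 'I_n, ((2 * n) %| qnum rho s)%N ->
     sD s = (k - a * c) * (1 - b * d / k).
Hypothesis hsDpi : forall s : 'I_n, qnum rho s = n %[mod 2 * n] ->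
     sD s = (k + a * c) * (1 + b * d / k).
Hypothesis hsDpair : forall s s' : 'I_n,
     ~~ ((2 * n) %| qnum rho s)%N -> qnum rho s <> n %[mod 2 * n] ->
     ((2 * n) %| qnum rho s + qnum rho s')%N -> sD s = sD s'.
Hypothesis hA : forall s : 'I_n, Acoef a c k (qang n rho s) != 0.

Local Notation w := (w R n rho).
Local Notation q s := (@qang R n rho s).
Local Notation pp := (@pp n rho n0).
Local Notation pw := (@prod_w R n rho n0).
Local Notation pwc := (@prod_wc R n rho n0).
Local Notation Aq s := (Acoef a c k (q s)).
Local Notation Bq s := (Bcoef a b c d (q s)).
Local Notation Cq s := (Ccoef b d k (q s)).
Local Notation lm s := (lam a b c d k (q s) (sD s)).

Lemma A_pp s : Aq (pp s) = Aq s. Proof. by rewrite /Acoef (@cos_pp R n rho n0). Qed.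
Lemma C_pp s : Cq (pp s) = Cq s. Proof. by rewrite /Ccoef (@cos_pp R n rho n0). Qed.
Lemma B_pp s : Bq (pp s) = - Bq s. Proof. by rewrite /Bcoef (@sin_pp R n rho n0) rmorphN mulrN. Qed.

Lemma sD_pp s : sD (pp s) = sD s.
Proof.
have h := @qnum_pp n rho n0 s; have l1 := @qnum_lt n rho n0 s; have l2 := @qnum_lt n rho n0 (pp s).
case: (eqVneq (qnum rho s) 0%N) => h0.
  rewrite (hsD0 s); last by rewrite (@dvd_iff n rho n0) h0.
  rewrite hsD0 // (@dvd_iff n rho n0); apply/eqP; move: h; rewrite h0; case: ifP => _; lia.
case: (eqVneq (qnum rho s) n) => hn.
  rewrite (hsDpi s); last by apply/(@mod_iff n rho n0).
  rewrite hsDpi //; apply/(@mod_iff n rho n0); move: h; rewrite hn; case: ifP => _; lia.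
symmetry; apply: hsDpair.
- by rewrite (@dvd_iff n rho n0).
- by move/(@mod_iff n rho n0)/eqP; rewrite (negbTE hn).
- by rewrite addnC h; case: ifP => _; rewrite ?dvdn0 ?dvdnn.
Qed.

Lemma lam_pp s : lm (pp s) = (sD s + 'i * Bq s) / Aq s.
Proof. by rewrite /lam sD_pp B_pp A_pp mulrN opprK. Qed.

Lemma E_fac (s : 'I_n) (x : C) :
  Aq s * x ^+ 2 - Cq s + 2%:R * 'i * Bq s * x = Aq s * ((x - lm s) * (x + lm (pp s))).
Proof.
have a0 := hA s.
rewrite lam_pp /lam.
transitivity (Aq s * x ^+ 2 + 2%:R * 'i * Bq s * x - (sD s ^+ 2 - 'i ^+ 2 * Bq s ^+ 2) / Aq s); last by field.
by rewrite sqr_i hsD /Dcoef; field.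
Qed.

Local Notation wpp := (@w_pp R n rho n0).

Lemma wJ' (s : 'I_n) : w s * Num.conj (w s) = 1.
Proof. exact: exJ. Qed.
Lemma wsum (s : 'I_n) : w s + Num.conj (w s) = 2%:R * (cos (q s))%:C.
Proof. rewrite /w exJE' exE; ring. Qed.

Lemma Afac (s : 'I_n) : Aq s = (a * c - k * w s) * (a * c - k * Num.conj (w s)).
Proof.
transitivity (a ^+ 2 * c ^+ 2 - a * c * k * (w s + Num.conj (w s)) + k ^+ 2 * (w s * Num.conj (w s))); last by ring.
by rewrite wsum wJ' /Acoef; ring.
Qed.
Lemma Cfac (s : 'I_n) : Cq s = (1 - b * d / k * w s) * (1 - b * d / k * Num.conj (w s)).
Proof.
transitivity (1 - b * d / k * (w s + Num.conj (w s)) + (b * d / k) ^+ 2 * (w s * Num.conj (w s))); last by ring.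
by rewrite wsum wJ' /Ccoef; field.
Qed.

Definition nu (s : 'I_n) : C := (1 - b * d / k * w s) / (a * c - k * w s).

Lemma acw0 (s : 'I_n) : a * c - k * w s != 0.
Proof. by apply: contraNneq (hA s) => h; rewrite Afac h mul0r. Qed.

Lemma prod_nu : \prod_(s < n) nu s = (1 + (-1) ^+ rho * (b * d / k) ^+ n) / (a ^+ n * c ^+ n + (-1) ^+ rho * k ^+ n).
Proof. by rewrite prodf_div !pw expr1n [(a * c) ^+ n]exprMn. Qed.

Lemma lam_pair (s : 'I_n) : lm s * lm (pp s) = Cq s / Aq s.
Proof.
have a0 := hA s.
rewrite lam_pp /lam.
transitivity ((sD s ^+ 2 - 'i ^+ 2 * Bq s ^+ 2) / Aq s ^+ 2); first by field.
by rewrite sqr_i hsD /Dcoef; field.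
Qed.

Lemma nu_pair (s : 'I_n) : nu s * nu (pp s) = Cq s / Aq s.
Proof. by rewrite /nu wpp mulf_div -Cfac -Afac. Qed.

Lemma fixed (s : 'I_n) : pp s = s -> lm s = (if qnum rho s == 0%N then -1 else 1) * nu s.
Proof.
move=> E.
have h := @qnum_pp n rho n0 s; rewrite E in h.
have hA0 := hA s; have h1 := acw0 s.
case: (eqVneq (qnum rho s) 0%N) => h0.
  have hq : q s = 0 by rewrite /qang h0 mulr0n mulr0 mul0r.
  move: hA0 h1; rewrite /lam /nu /Bcoef /Acoef /w hq sin0 cos0 ex0 (hsD0 s); last by rewrite (@dvd_iff n rho n0) h0.
  rewrite rmorph0 rmorph1 mulr0 mulr0 subr0 !mulr1.
  have -> : a ^+ 2 * c ^+ 2 - 2%:R * k * a * c + k ^+ 2 = (a * c - k) ^+ 2 by ring.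
  move=> hA1 h2; field; by rewrite h2 k0.
have hn : qnum rho s = n by move: h; case: ifP => _; lia.
have hq : q s = pi by rewrite /qang hn mulfK // pnatr_eq0 -lt0n.
move: hA0 h1; rewrite /lam /nu /Bcoef /Acoef /w hq sinpi cospi expi (hsDpi s); last by apply/(@mod_iff n rho n0).
rewrite rmorph0 rmorphN1 !mulr0 subr0 mul1r.
have -> : a ^+ 2 * c ^+ 2 - 2%:R * k * a * c * -1 + k ^+ 2 = (a * c + k) ^+ 2 by ring.
have -> : a * c - k * -1 = a * c + k by ring.
move=> hA1 h2; field; by rewrite h2 k0.
Qed.

Lemma prod_e : \prod_(s < n | pp s == s :> nat) (if qnum rho s == 0%N then -1 else 1) = (-1) ^+ rho :> C.
Proof. exact: prod_e_gen. Qed.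

Lemma prod_lam : \prod_(s < n) lm s = (-1) ^+ rho * \prod_(s < n) nu s.
Proof.
rewrite (@prod_inv _ _ _ (@pp_invol n rho n0) (fun s => lm s)) (@prod_inv _ _ _ (@pp_invol n rho n0) nu).
rewrite -prod_e.
have -> : \prod_(s < n | (s < pp s)%N) (lm s * lm (pp s)) = \prod_(s < n | (s < pp s)%N) (nu s * nu (pp s)).
  by apply: eq_bigr => s _; rewrite lam_pair nu_pair.
have -> : \prod_(s < n | pp s == s :> nat) lm s = \prod_(s < n | pp s == s :> nat) (if qnum rho s == 0%N then -1 else 1) * \prod_(s < n | pp s == s :> nat) nu s.
  rewrite -big_split /=.
  by apply: eq_bigr => s /eqP h; apply: fixed; apply/val_inj.
ring.
Qed.

End Part2.

Lemma poly_eq_ev (F : numDomainType) (p q : {poly F}) : (forall x, p.[x] = q.[x]) -> p = q.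
Proof.
move=> H; apply/eqP; rewrite -subr_eq0; apply/eqP.
apply: (@roots_geq_poly_eq0 _ _ [seq i%:R | i <- iota 0 (size (p - q))]).
- by apply/allP => x _; rewrite /root hornerD hornerN H subrr.
- by rewrite map_inj_uniq ?iota_uniq // => i j /eqP; rewrite eqr_nat => /eqP.
- by rewrite size_map size_iota.
Qed.

Lemma signs_exist (F : idomainType) (I : eqType) (f : I -> F) (js : seq I) (rs : seq F) :
  uniq js -> perm_eq [seq r ^+ 2 | r <- rs] [seq f j ^+ 2 | j <- js] ->
  exists sg : I -> bool, perm_eq rs [seq - ((-1) ^+ sg j * f j) | j <- js].
Proof.
elim: js rs => [|j js IH] rs /=.
  move=> _ /perm_size; rewrite size_map => /eqP; rewrite size_eq0 => /eqP ->.
  by exists (fun _ => false).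
case/andP => jn ujs hp.
have : f j ^+ 2 \in [seq r ^+ 2 | r <- rs] by rewrite (perm_mem hp) mem_head.
case/mapP => r rin hr.
have hpr := perm_to_rem rin.
have hp' : perm_eq [seq x ^+ 2 | x <- rem r rs] [seq f j0 ^+ 2 | j0 <- js].
  have h2 := perm_map (fun x => x ^+ 2) hpr; rewrite /= -hr in h2.
  rewrite perm_sym in h2.
  by rewrite -(perm_cons (f j ^+ 2)); apply: perm_trans h2 hp.
have [sg Hsg] := IH _ ujs hp'.
exists (fun i => if i == j then (r != - f j) else sg i).
rewrite /= eqxx.
have -> : [seq - ((-1) ^+ (if j0 == j then r != - f j else sg j0) * f j0) | j0 <- js]
        = [seq - ((-1) ^+ sg j0 * f j0) | j0 <- js].
  apply/eq_in_map => i iin.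
  by have -> : (i == j) = false by apply/eqP => eij; move: jn; rewrite -eij iin.
have -> : - ((-1) ^+ (r != - f j) * f j) = r.
  case: eqP => [->|ne] /=; first by rewrite expr0 mul1r.
  move/eqP: hr; rewrite eqf_sqr => /orP[/eqP <-|/eqP h]; first by rewrite expr1 mulN1r opprK.
  by exfalso; apply: ne; rewrite h opprK.
by apply: perm_trans hpr _; rewrite perm_cons.
Qed.

Lemma prod_neg (F : comNzRingType) (n : nat) (f : 'I_n -> F) : \prod_(i < n) (- f i) = (-1) ^+ n * \prod_(i < n) f i.
Proof. under eq_bigr do rewrite -mulN1r. by rewrite big_split /= prodr_const card_ord. Qed.

Theorem mainTheorem8 (R : realType) (n : nat) (rho : bool)
  (a b c d k : R[i]) (t : {poly R[i]}) (sD : 'I_n -> R[i]) :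
  (0 < n)%N ->
  a != 0 -> b != 0 -> c != 0 -> d != 0 -> k != 0 ->
  a ^+ n * c ^+ n + (-1) ^+ rho * k ^+ n != 0 ->
  (size t <= n.+1)%N ->
  t.[0] = 1 + (-1) ^+ rho * b ^+ n * d ^+ n / k ^+ n ->
  t`_n = a ^+ n * c ^+ n + (-1) ^+ rho * k ^+ n ->
  (forall x : R[i],
     t.[x] * t.[- x] =
       (-1) ^+ rho * (zfun n a b c d k x + zfun n a b c d k (- x))
       + \tr ((Lmat a b c d k (x ^+ 2)) ^+ n)) ->
  (* the branch of sqrt D(q_s): *)
  (forall s : 'I_n, sD s ^+ 2 = Dcoef a b c d k (qang n rho s)) ->
  (forall s : 'I_n, ((2 * n) %| qnum rho s)%N ->
     sD s = (k - a * c) * (1 - b * d / k)) ->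
  (forall s : 'I_n, qnum rho s = n %[mod 2 * n] ->
     sD s = (k + a * c) * (1 + b * d / k)) ->
  (forall s s' : 'I_n,
     ~~ ((2 * n) %| qnum rho s)%N -> qnum rho s <> n %[mod 2 * n] ->
     ((2 * n) %| qnum rho s + qnum rho s')%N -> sD s = sD s') ->
  (forall x : R[i],
     t.[x] * t.[- x] =
       (-1) ^+ n * \prod_(s < n)
         (Acoef a c k (qang n rho s) * x ^+ 2 - Ccoef b d k (qang n rho s)
          + 2%:R * 'i * Bcoef a b c d (qang n rho s) * x))
  /\
  ((forall s : 'I_n, Acoef a c k (qang n rho s) != 0) ->
   exists sigma : 'I_n -> bool,
     \prod_(s < n) (-1) ^+ (sigma s) = (-1) ^+ rho :> R[i] /\
     forall x : R[i],
       t.[x] = (a ^+ n * c ^+ n + (-1) ^+ rho * k ^+ n) *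
               \prod_(s < n)
                 (x + (-1) ^+ (sigma s) * lam a b c d k (qang n rho s) (sD s))).
Proof.
move=> n0 a0 b0 c0 d0 k0 hlead hsz ht0 htn hyp hsD hsD0 hsDpi hsDpair.
set lead := a ^+ n * c ^+ n + (-1) ^+ rho * k ^+ n in hlead htn *.
have P1 : forall x : R[i], t.[x] * t.[- x] = (-1) ^+ n * \prod_(s < n)
         (Acoef a c k (qang n rho s) * x ^+ 2 - Ccoef b d k (qang n rho s)
          + 2%:R * 'i * Bcoef a b c d (qang n rho s) * x).
  by move=> x; rewrite hyp (@part1 R n rho a b c d k n0 k0 x).
split; first exact: P1.
move=> hA.
pose lm (s : 'I_n) := lam a b c d k (qang n rho s) (sD s).
have hpp := @pp_invol n rho n0.
have Efac := @E_fac R n rho a b c d k sD n0 k0 hsD hsD0 hsDpi hsDpair hA.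
have plam := @prod_lam R n rho a b c d k sD n0 k0 hsD hsD0 hsDpi hsDpair hA.
have pnu := @prod_nu R n rho a b c d k n0.
have pA : \prod_(s < n) Acoef a c k (qang n rho s) = lead ^+ 2.
  under eq_bigr do rewrite (@Afac R n rho a c k).
  by rewrite big_split /= (@prod_w R n rho n0) (@prod_wc R n rho n0) exprMn expr2.
have P2 : forall x, t.[x] * t.[- x] = lead ^+ 2 * \prod_(s < n) (lm s ^+ 2 - x ^+ 2).
  move=> x; rewrite P1.
  under eq_bigr do rewrite Efac.
  rewrite big_split /= pA big_split /=.
  have -> : \prod_(s < n) (x + lm (@pp n rho n0 s)) = \prod_(s < n) (x + lm s).
    by rewrite [in RHS](reindex_inj (inv_inj hpp)).
  have -> : \prod_(s < n) (lm s ^+ 2 - x ^+ 2) = \prod_(s < n) (- ((x - lm s) * (x + lm s))).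
    by apply: eq_bigr => s _; ring.
  rewrite prod_neg big_split /=; ring.
have hlc0 : t`_n != 0 by rewrite htn.
have st : size t = n.+1.
  apply/eqP; rewrite eqn_leq hsz /=; rewrite ltnNge; apply/negP => h.
  by move: hlc0; rewrite nth_default // eqxx.
have hlc : lead_coef t = lead by rewrite lead_coefE st /= htn.
have [rs Hrs] := closed_field_poly_normal t.
have hsr : size rs = n.
  have := congr1 (fun p : {poly R[i]} => size p) Hrs; rewrite /= size_scale; last by rewrite hlc.
  by rewrite size_prod_XsubC st => -[].
pose rr (i : 'I_n) := nth 0 rs i.
have tev : forall x, t.[x] = lead * \prod_(i < n) (x - rr i).
  move=> x; rewrite {1}Hrs hornerZ hlc horner_prod; congr (_ * _).
  rewrite (big_nth 0) hsr big_mkord; apply: eq_bigr => i _; by rewrite hornerXsubC.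
have key : forall x, \prod_(i < n) (x ^+ 2 - rr i ^+ 2) = \prod_(s < n) (x ^+ 2 - lm s ^+ 2).
  move=> x; have := P2 x; rewrite !tev mulrACA -big_split /= -expr2 => E.
  have E2 : \prod_(i < n) (rr i ^+ 2 - x ^+ 2) = \prod_(s < n) (lm s ^+ 2 - x ^+ 2).
    apply: (mulfI (expf_neq0 2 hlead)); rewrite -E; congr (_ * _).
    by apply: eq_bigr => i _; ring.
  under eq_bigr do rewrite -opprB.
  under [in RHS]eq_bigr do rewrite -opprB.
  by rewrite !prod_neg E2.
have hx : forall (g : 'I_n -> R[i]) y, (\prod_(i < n) ('X - (g i)%:P)).[y] = \prod_(i < n) (y - g i).
  by move=> g y; rewrite horner_prod; apply: eq_bigr => i _; rewrite hornerXsubC.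
have PE : \prod_(i < n) ('X - (rr i ^+ 2)%:P) = \prod_(s < n) ('X - (lm s ^+ 2)%:P).
  apply: poly_eq_ev => y; rewrite !hx.
  by have := key (sqrtC y); rewrite sqrtCK.
have Hperm : perm_eq [seq r ^+ 2 | r <- [seq rr i | i <- index_enum 'I_n]] [seq lm s ^+ 2 | s <- index_enum 'I_n].
  rewrite -map_comp; apply: prod_XsubC_eq; rewrite !big_map; exact: PE.
have [sg Hsg] := @signs_exist _ _ lm (index_enum 'I_n) _ (index_enum_uniq _) Hperm.
have tev2 : forall x, t.[x] = lead * \prod_(s < n) (x + (-1) ^+ sg s * lm s).
  move=> x; rewrite tev; congr (_ * _).
  have e1 : \prod_(i < n) (x - rr i) = \prod_(z <- [seq rr i | i <- index_enum 'I_n]) (x - z) by rewrite big_map.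
  by rewrite e1 (perm_big _ Hsg) big_map; apply: eq_bigr => s _; rewrite opprK.
set t0 := 1 + (-1) ^+ rho * (b * d / k) ^+ n.
have t0E : t.[0] = t0 by rewrite ht0 /t0 expr_div_n exprMn !mulrA.
have hl : \prod_(s < n) lm s = (-1) ^+ rho * (t0 / lead) by rewrite plam pnu.
pose P : R[i] := \prod_(s < n) (-1) ^+ sg s.
have t00 : t.[0] = lead * P * \prod_(s < n) lm s.
  rewrite tev2 -mulrA -big_split /=; congr (_ * _); apply: eq_bigr => s _; by rewrite add0r.
have sr : (-1) ^+ rho * (-1) ^+ rho = 1 :> R[i] by rewrite -exprMn mulrNN mulr1 expr1n.
case: (eqVneq t0 0) => ht00; last first.
  exists sg; split => //.
  have h : t0 = lead * P * ((-1) ^+ rho * (t0 / lead)) by rewrite -{1}t0E t00 hl.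
  have h1 : P * (-1) ^+ rho = 1.
    apply: (mulIf ht00); rewrite mul1r {2}h; field; exact: hlead.
  apply: (@mulIf _ ((-1) ^+ rho)); first by rewrite signr_eq0.
  by rewrite /= h1 sr.
have : \prod_(s < n) lm s == 0 by rewrite hl ht00 mul0r mulr0.
case/prodf_eq0 => s0 _ /eqP hs0.
have hP : P = 1 \/ P = -1.
  rewrite /P; apply: (big_ind (fun x : R[i] => x = 1 \/ x = -1)).
  - by left.
  - move=> x y [->|->] [->|->]; rewrite ?mul1r ?mulr1 ?mulrNN ?mulr1; by [left|right].
  - by move=> i _; case: (sg i); [right; exact: expr1 | left; exact: expr0].
have hr : (-1) ^+ rho = 1 :> R[i] \/ (-1) ^+ rho = -1 :> R[i] by case: (rho); [right|left].
case: (eqVneq P ((-1) ^+ rho)) => hPr.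
  by exists sg; split.
exists (fun s => if s == s0 then ~~ sg s0 else sg s); split.
  rewrite (bigD1 s0) //= eqxx.
  rewrite (eq_bigr (fun s => (-1) ^+ sg s)); last by move=> s /negbTE ->.
  have : P = (-1) ^+ sg s0 * \prod_(s < n | s != s0) (-1) ^+ sg s by rewrite /P (bigD1 s0).
  have -> : (-1) ^+ (~~ sg s0) = - (-1) ^+ sg s0 :> R[i] by case: (sg s0); rewrite ?expr0 ?expr1 ?opprK.
  rewrite mulNr => <-.
  move: hPr; case: hP => ->; case: hr => ->; rewrite ?opprK ?eqxx //.
move=> x; rewrite tev2; congr (_ * _); apply: eq_bigr => s _.
case: (eqVneq s s0) => [->|_] /=; last by [].
by rewrite /lm in hs0 *; rewrite hs0 !mulr0.
Qed.
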